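(* There exist instances and a partition $\Pi$ of the players that maximizes the number of winning pools and, among all such partitions, is lexicographically optimal with respect to its sorted pool stakes (the smallest pool stake is maximized, then the second smallest, and so on), such that $\Pi$ is a Nash equilibrium under the proportional scheme but the proportional scheme is not Sybil-proof with respect to $\Pi$.
   Context: Oceanic model (including the purely atomic case with no non-atomic players): finitely many atomic players, player $i$ with stake $a_i>0$, and possibly a continuum of non-atomic players (a measurable set contributes stake equal to its measure); threshold $h>0$ with $a_i<h$. Pools partition all players; a pool $S$ has stake $m(S)$ and reward $\rho(S)=1$ if $m(S)\ge h$ (winning), else $0$. Proportional scheme: an atomic player with stake $a_i$ in pool $C$ receives $\frac{a_i}{m(C)}\rho(C)$; non-atomic players receive $\rho(C)/m(C)$ per unit of stake. A partition into winning pools is a Nash equilibrium if no atomic player can strictly increase her payment by moving to another pool or opening a new pool alone, and no non-atomic player can strictly increase her per-unit reward by moving to another pool. Sybil strategy: given $\Pi$, an atomic player $i$ splits her stake into nonnegative amounts $s_1,\dots,s_t$ summing to $a_i$ and joins $t$ distinct pools of $\Pi$ (her original pool being taken without her), contributing $s_j$ to the $j$-th as a separate atomic identity; others stay put; her payoff is the sum of the payments to her identities. The scheme is Sybil-proof with respect to $\Pi$ if no atomic player becomes strictly better off by a Sybil strategy. *)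

(* Defs.v *)
From HB Require Import structures.
From mathcomp Require Import all_boot all_order all_algebra.
From mathcomp Require Import reals.
Set Implicit Arguments. Unset Strict Implicit. Unset Printing Implicit Defensive.
Import Order.TTheory GRing.Theory Num.Theory.
Local Open Scope ring_scope.

(* A partition of the players of an instance with n atomic players (indexed by
   'I_n) and a continuum of non-atomic players.  Pools are labelled by
   'I_(npools P); [pool P i] is the pool of atomic player i, and
   [namass P j] is the measure of the set of non-atomic players in pool j. *)
Record ppartition (R : Type) (n : nat) := Partition {
  npools : nat;
  pool : 'I_n -> 'I_npools;
  namass : 'I_npools -> R }.

Arguments npools {R n} p.
Arguments pool {R n} p _.
Arguments namass {R n} p _.

Section Defs.
Local Unset Implicit Arguments.
Variables (R : realFieldType) (n : nat).
Variables (a : 'I_n -> R) (h M : R).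

Definition valid (P : ppartition R n) : Prop :=
  (forall j, 0 <= namass P j) /\
  \sum_(j < npools P) namass P j = M /\
  (forall j, (exists i, pool P i = j) \/ 0 < namass P j).

Definition stake (P : ppartition R n) (j : 'I_(npools P)) : R :=
  \sum_(i | pool P i == j) a i + namass P j.

Definition rho (x : R) : R := if h <= x then 1 else 0.

Definition nwin (P : ppartition R n) : nat :=
  #|[set j : 'I_(npools P) | h <= stake P j]|.

Definition sorted_stakes (P : ppartition R n) : seq R :=
  sort <=%R [seq stake P j | j <- enum 'I_(npools P)].

Fixpoint lexle (s t : seq R) : bool :=
  match s, t with
  | [::], _ => true
  | _ :: _, [::] => false
  | x :: s', y :: t' => (x < y) || ((x == y) && lexle s' t')
  end.

Definition payment (P : ppartition R n) (i : 'I_n) : R :=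
  a i / stake P (pool P i) * rho (stake P (pool P i)).

Definition nash (P : ppartition R n) : Prop :=
  (forall j, h <= stake P j) /\
  (forall i (D : 'I_(npools P)), D != pool P i ->
     a i / (stake P D + a i) * rho (stake P D + a i) <= payment P i) /\
  (forall i, a i / a i * rho (a i) <= payment P i) /\
  (forall C D : 'I_(npools P), 0 < namass P C ->
     rho (stake P D) / stake P D <= rho (stake P C) / stake P C).

Definition stake_without (P : ppartition R n) (i : 'I_n) (j : 'I_(npools P)) : R :=
  stake P j - (if pool P i == j then a i else 0).

(* Sybil strategy of player i: amount s j >= 0 placed in pool j of P (the
   pools joined are those with s j > 0; zero contributions are harmless),
   with total a i. *)
Definition sybil_payoff (P : ppartition R n) (i : 'I_n) (s : 'I_(npools P) -> R) : R :=
  \sum_(j < npools P)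
     s j / (stake_without P i j + s j) * rho (stake_without P i j + s j).

Definition sybil_proof (P : ppartition R n) : Prop :=
  forall i (s : 'I_(npools P) -> R),
    (forall j, 0 <= s j) -> \sum_(j < npools P) s j = a i ->
    sybil_payoff P i s <= payment P i.

End Defs.

Arguments valid {R n} M P.
Arguments stake {R n} a P j.
Arguments rho {R} h x.
Arguments nwin {R n} a h P.
Arguments sorted_stakes {R n} a P.
Arguments lexle {R} s t.
Arguments payment {R n} a h P i.
Arguments nash {R n} a h P.
Arguments stake_without {R n} a P i j.
Arguments sybil_payoff {R n} a h P i s.
Arguments sybil_proof {R n} a h P.

(* Main.v *)
Require Import Defs.
From HB Require Import structures.
From mathcomp Require Import all_boot all_order all_algebra.
From mathcomp Require Import reals.
From mathcomp Require Import lra.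
Import Order.TTheory GRing.Theory Num.Theory.
Local Open Scope ring_scope.

Section Ex.
Local Set Implicit Arguments.
Variable R : realType.

Definition ea (i : 'I_4) : R := if odd i then 6 else 9.
Definition epool (i : 'I_4) : 'I_2 := if (i < 2)%N then ord0 else ord_max.
Definition eP : ppartition R 4 := @Partition R 4 2 epool (fun _ => 0).

Lemma ea_pos i : 0 < ea i /\ ea i < 11.
Proof. rewrite /ea; case: ifP => _; split; lra. Qed.

Lemma sum_stake n (a : 'I_n -> R) (Q : ppartition R n) :
  \sum_j stake a Q j = \sum_i a i + \sum_j namass Q j.
Proof.
rewrite /stake big_split /=; congr (_ + _).
by rewrite (partition_big (pool Q) predT).
Qed.

Lemma sum_ea : \sum_i ea i = 30.
Proof.
rewrite !big_ord_recl big_ord0 /ea /=. lra.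
Qed.

Lemma stake_ge0 (Q : ppartition R 4) j : valid 0 Q -> 0 <= stake ea Q j.
Proof.
move=> [H1 _]; rewrite /stake addr_ge0 //.
by apply: sumr_ge0 => i _; case: (ea_pos i) => /ltW.
Qed.

Lemma sumQ (Q : ppartition R 4) : valid 0 Q -> \sum_j stake ea Q j = 30.
Proof. by move=> [_ [H2 _]]; rewrite sum_stake sum_ea H2 addr0. Qed.

Lemma nwin_le (Q : ppartition R 4) : valid 0 Q -> (nwin ea 11 Q <= 2)%N.
Proof.
move=> vQ; rewrite /nwin.
set W := [set j | _].
have H1 : \sum_(j in W) (11 : R) <= 30.
  rewrite -(sumQ vQ) (bigID (mem W) predT) /= -[X in X <= _]addr0 lerD //.
    by apply: ler_sum => j; rewrite inE.
  by apply: sumr_ge0 => j _; apply: stake_ge0.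
rewrite sumr_const in H1.
case: leqP => // H3.
have : (3%:R : R) <= #|W|%:R by rewrite ler_nat.
move: H1; rewrite -mulr_natr => H1 H4. nra.
Qed.

Lemma stakeP j : stake ea eP j = 15.
Proof.
rewrite /stake /= addr0 big_mkcond !big_ord_recl big_ord0 /=.
have: j = ord0 \/ j = ord_max.
  case: j => [[|[|k]] Hk]; [left|right|by []]; exact: val_inj.
by case=> ->; rewrite /ea /epool /=; lra.
Qed.

Lemma nwinP : nwin ea 11 eP = 2%N.
Proof.
rewrite /nwin.
rewrite (_ : [set j | _] = setT); first by rewrite cardsT card_ord.
by apply/setP => j; rewrite !inE stakeP; lra.
Qed.

Lemma validP : valid 0 eP.
Proof.
split; first by move=> j /=.
split; first by rewrite /= big1.
move=> j; left.
have: j = ord0 \/ j = ord_max.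
  case: j => [[|[|k]] Hk]; [left|right|by []]; exact: val_inj.
case=> ->; [exists ord0 | exists ord_max]; by [].
Qed.

Lemma key (Q : ppartition R 4) : valid 0 Q -> nwin ea 11 Q = 2%N ->
  (forall x, x \in sorted_stakes ea Q -> 15 <= x) ->
  sorted_stakes ea Q = [:: 15; 15].
Proof.
move=> vQ nQ Hall.
have Hsz : (2 <= size (sorted_stakes ea Q))%N.
  rewrite /sorted_stakes size_sort size_map size_enum_ord.
  move: nQ; rewrite /nwin => nQ.
  by move: (max_card (mem [set j | 11 <= stake ea Q j])); rewrite nQ card_ord.
have Hsum : \sum_(x <- sorted_stakes ea Q) x = 30.
  rewrite /sorted_stakes (perm_big _ (permEl (perm_sort _ _))) big_map big_enum /=.
  exact: sumQ.
move: Hall Hsz Hsum.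
case: (sorted_stakes ea Q) => [|x [|y s]] //= Hall _.
have Hx : 15 <= x by apply: Hall; rewrite inE eqxx.
have Hy : 15 <= y by apply: Hall; rewrite !inE eqxx orbT.
case: s Hall => [|z s] Hall.
  rewrite !big_cons big_nil addr0 => H.
  have -> : x = 15 by lra.
  by have -> : y = 15 by lra.
have Hz : 15 <= z by apply: Hall; rewrite !inE eqxx !orbT.
have Hs : 0 <= \sum_(w <- s) w.
  rewrite big_seq_cond; apply: sumr_ge0 => w /andP [Hw _].
  have : 15 <= w by apply: Hall; rewrite !inE Hw !orbT.
  lra.
rewrite !big_cons => H. clear Hall. move: Hs H; set t := \sum_(_ <- s) _ => Hs H. have : (30:R) < 30 by lra. by rewrite ltxx.
Qed.

Lemma sortedP : sorted_stakes ea eP = [:: 15; 15].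
Proof.
apply: key; [exact: validP | exact: nwinP |] => x.
rewrite /sorted_stakes mem_sort => /mapP [j _ ->].
by rewrite stakeP.
Qed.

End Ex.
Arguments ea {R} i.
Arguments eP {R}.

Theorem theorem5p2 (R : realType) :
  exists (n : nat) (a : 'I_n -> R) (h M : R) (P : ppartition R n),
    [/\ 0 < h, (forall i, 0 < a i /\ a i < h), 0 <= M & valid M P] /\
    (forall Q : ppartition R n, valid M Q -> (nwin a h Q <= nwin a h P)%N) /\
    (forall Q : ppartition R n, valid M Q -> nwin a h Q = nwin a h P ->
        lexle (sorted_stakes a Q) (sorted_stakes a P)) /\
    nash a h P /\
    ~ sybil_proof a h P.
Proof.
exists 4%N, (@ea R), 11, 0, (@eP R).
split; first split; [by rewrite ltr0n | exact: ea_pos | by [] | exact: validP | ].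
split; first by move=> Q vQ; rewrite nwinP; exact: nwin_le.
split.
  move=> Q vQ nQ; rewrite sortedP.
  rewrite nwinP in nQ.
  case: (boolP [forall x : 'I_(npools Q), 15 <= stake ea Q x]) => Hf.
    rewrite key //; first by rewrite /= ltxx eqxx.
    move=> x; rewrite /sorted_stakes mem_sort => /mapP [j _ ->].
    by move/forallP: Hf => /(_ j).
  move/forallPn: Hf => [j Hj].
  have Hj' : stake ea Q j < 15 by rewrite ltNge.
  have Hin : stake ea Q j \in sorted_stakes ea Q.
    by rewrite /sorted_stakes mem_sort map_f // mem_enum.
  have Hsrt := sort_le_sorted [seq stake ea Q j | j <- enum 'I_(npools Q)].
  rewrite -/(sorted_stakes ea Q) in Hsrt.
  move: Hin Hsrt; case: (sorted_stakes ea Q) => [|x s] //= Hin Hsrt.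
  have Hx : x <= stake ea Q j.
    move: Hin; rewrite inE => /orP [/eqP -> //|Hin].
    by move/le_path_min/allP: Hsrt => /(_ _ Hin).
  by rewrite (lt_le_trans (le_lt_trans Hx Hj')) //.
split.
  split; first by move=> j; rewrite stakeP; lra.
  split.
    move=> i D _; rewrite /payment !stakeP /rho.
    have [H1 H2] := ea_pos R i.
    have -> : (11 <= 15 + ea i :> R) by lra.
    have -> : ((11 : R) <= 15) by lra.
    rewrite !mulr1 ler_pdivrMr; last lra.
    rewrite mulrDr -mulrA mulVf; last lra.
    rewrite mulr1 lerDl; apply: mulr_ge0; [apply: mulr_ge0; [lra | rewrite invr_ge0; lra] | lra].
  split.
    move=> i; rewrite /payment stakeP /rho.
    have [H1 H2] := ea_pos R i.
    have -> : (11 <= ea i :> R) = false by apply: negbTE; rewrite -ltNge.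
    have H3 : ((11 : R) <= 15) by lra. rewrite mulr0 H3 mulr1 divr_ge0 //; lra.
  by move=> C D /=; rewrite ltxx.
move=> H.
pose s (j : 'I_2) : R := if j == ord0 then 5 else 4.
have := H ord0 s.
have Hs0 : forall j, 0 <= s j by move=> j; rewrite /s; case: ifP => _; lra.
have Hs1 : \sum_(j < 2) s j = ea ord0.
  rewrite !big_ord_recl big_ord0 /s /ea /=; lra.
move=> /(_ Hs0 Hs1).
rewrite /sybil_payoff /payment stakeP !big_ord_recl big_ord0 /stake_without !stakeP /s /ea /rho /=.
have -> : (11 <= 15 - 9 + 5 :> R) by lra.
have -> : (11 <= 15 - 0 + 4 :> R) by lra.
have -> : ((11 : R) <= 15) by lra.
have -> : (15 - 9 + 5 : R) = 11 by lra.
have -> : (15 - 0 + 4 : R) = 19 by lra.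
by rewrite leNgt => /negP; apply; lra.
Qed.
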